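(* Assume $\mu>\mu_{c_1}(D_1,D_2)$. Then system $( * )$ is uniformly persistent with respect to solutions with $N(0)>0$, $P(0)>0$, $Z(0)>0$: there exists $\varepsilon>0$ such that every such solution satisfies $\liminf_{t\to\infty}N(t)\ge\varepsilon$, $\liminf_{t\to\infty}P(t)\ge\varepsilon$ and $\liminf_{t\to\infty}Z(t)\ge\varepsilon$.
   Context: Standing setup. Let $D>0$, $D_1>0$, $D_2>0$, $\gamma_1>0$, $\gamma_2>0$ be constants and $\mu>0$ a parameter. Let $f_1,f_2:[0,\infty)\to[0,\infty)$ be continuously differentiable and bounded, with $f_i(0)=0$, $f_i'(x)>0$ for all $x\ge 0$, $\lim_{N\to\infty}f_1(N)>\max(D,D_1)/\gamma_1$ and $\lim_{P\to\infty}f_2(P)>\max(D,D_2)/\gamma_2$. The system $( * )$ is $$\frac{dN}{dt}=(\mu-N)D-Pf_1(N),\quad \frac{dP}{dt}=\gamma_1Pf_1(N)-D_1P-Zf_2(P),\quad \frac{dZ}{dt}=\gamma_2Zf_2(P)-D_2Z.$$ $\lambda_P(d)$ is the unique number with $f_1(\lambda_P(d))=d/\gamma_1$, $\lambda_Z(d)$ the unique number with $f_2(\lambda_Z(d))=d/\gamma_2$, and $\mu_{c_1}(D_1,D_2)=\lambda_P(D_1)+D_1\lambda_Z(D_2)/(D\gamma_1)$. *)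

(* Defs.v *)
From Stdlib Require Import Reals.
Open Scope R_scope.

Definition response_fun (f : R -> R) (thr : R) : Prop :=
  (forall x, 0 <= x -> 0 <= f x) /\
  f 0 = 0 /\
  (exists f' : R -> R,
      (forall x, 0 <= x -> derivable_pt_lim f x (f' x)) /\
      (forall x, 0 <= x -> continuity_pt f' x) /\
      (forall x, 0 <= x -> 0 < f' x)) /\
  (exists B, forall x, 0 <= x -> Rabs (f x) <= B) /\
  (exists L, thr < L /\
     forall eps, 0 < eps -> exists M, forall x, M <= x -> Rabs (f x - L) < eps).

(* mu_{c1}(D1,D2) = lambda_P(D1) + D1 lambda_Z(D2) / (D gamma1),
   given the values lamP = lambda_P(D1), lamZ = lambda_Z(D2). *)
Definition mu_c1 (D gamma1 D1 lamP lamZ : R) : R :=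
  lamP + D1 * lamZ / (D * gamma1).

Definition right_cont_at0 (u : R -> R) : Prop :=
  forall eps, 0 < eps -> exists delta, 0 < delta /\
    forall t, 0 <= t < delta -> Rabs (u t - u 0) < eps.

Definition is_solution (mu D D1 D2 gamma1 gamma2 : R) (f1 f2 : R -> R)
  (N P Z : R -> R) : Prop :=
  right_cont_at0 N /\ right_cont_at0 P /\ right_cont_at0 Z /\
  forall t, 0 < t ->
    derivable_pt_lim N t ((mu - N t) * D - P t * f1 (N t)) /\
    derivable_pt_lim P t (gamma1 * P t * f1 (N t) - D1 * P t - Z t * f2 (P t)) /\
    derivable_pt_lim Z t (gamma2 * Z t * f2 (P t) - D2 * Z t).

Definition liminf_ge (u : R -> R) (eps : R) : Prop :=
  forall delta, 0 < delta -> exists T, forall t, T <= t -> eps - delta <= u t.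

(* Main.v *)
Require Import Defs.
From Stdlib Require Import Reals.
Open Scope R_scope.
From Stdlib Require Import Lra Classical.
From Coquelicot Require Import Coquelicot.
Open Scope R_scope.

Lemma dval f t a b : derivable_pt_lim f t a -> a = b -> derivable_pt_lim f t b.
Proof. intros H ->; exact H. Qed.
Lemma d_plus u v t a b : derivable_pt_lim u t a -> derivable_pt_lim v t b ->
  derivable_pt_lim (fun x => u x + v x) t (a + b).
Proof. intros; apply (derivable_pt_lim_plus u v); auto. Qed.
Lemma d_minus u v t a b : derivable_pt_lim u t a -> derivable_pt_lim v t b ->
  derivable_pt_lim (fun x => u x - v x) t (a - b).
Proof. intros; apply (derivable_pt_lim_minus u v); auto. Qed.
Lemma d_mult u v t a b : derivable_pt_lim u t a -> derivable_pt_lim v t b ->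
  derivable_pt_lim (fun x => u x * v x) t (a * v t + u t * b).
Proof. intros; apply (derivable_pt_lim_mult u v); auto. Qed.
Lemma d_scal c u t a : derivable_pt_lim u t a ->
  derivable_pt_lim (fun x => c * u x) t (c * a).
Proof. intros; apply (derivable_pt_lim_scal u); auto. Qed.
Lemma d_const c t : derivable_pt_lim (fun _ => c) t 0.
Proof. apply derivable_pt_lim_const. Qed.
Lemma d_id t : derivable_pt_lim (fun x => x) t 1.
Proof. apply derivable_pt_lim_id. Qed.
Lemma d_comp g u t a b : derivable_pt_lim u t a -> derivable_pt_lim g (u t) b ->
  derivable_pt_lim (fun x => g (u x)) t (b * a).
Proof. intros H1 H2. exact (derivable_pt_lim_comp u g t a b H1 H2). Qed.
Lemma d_ln u t a : 0 < u t -> derivable_pt_lim u t a ->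
  derivable_pt_lim (fun x => ln (u x)) t (a / u t).
Proof. intros Hp H. eapply dval. apply d_comp; [exact H| apply derivable_pt_lim_ln; exact Hp].
  unfold Rdiv; ring. Qed.
Lemma d_sq u t a : derivable_pt_lim u t a ->
  derivable_pt_lim (fun x => (u x)^2) t (2 * u t * a).
Proof. intros H. eapply dval. apply (d_mult u (fun x => u x * 1)). exact H.
  eapply dval. apply d_mult. exact H. apply d_const. reflexivity.
  simpl; ring. Qed.
Lemma d_explin C t : derivable_pt_lim (fun r => exp (C*r)) t (C * exp (C*t)).
Proof. eapply dval. apply (d_comp exp (fun r => C*r)).
  eapply dval. apply d_scal. apply d_id. reflexivity.
  apply derivable_pt_lim_exp. ring. Qed.

Lemma d_cont f t a : derivable_pt_lim f t a -> continuity_pt f t.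
Proof. intros H. apply derivable_continuous_pt. exists a. exact H. Qed.

Lemma cont_eps f x : continuity_pt f x -> forall e, 0 < e ->
  exists d, 0 < d /\ forall y, Rabs (y - x) < d -> Rabs (f y - f x) < e.
Proof.
  intros H e He. destruct (H e He) as [d [Hd Hd2]].
  exists d; split; auto. intros y Hy.
  destruct (Req_dec y x) as [->|Hne].
  - unfold Rminus; rewrite Rplus_opp_r, Rabs_R0; auto.
  - apply (Hd2 y). split. split. exact I. auto. exact Hy.
Qed.

Lemma cont_ind (A : R -> Prop) (a b : R) :
  a <= b -> A a ->
  (forall s, a <= s < b -> A s -> exists d, 0 < d /\ forall r, s <= r < s + d -> A r) ->
  (forall s, a < s <= b -> (forall r, a <= r < s -> A r) -> A s) ->
  forall s, a <= s <= b -> A s.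
Proof.
  intros Hab HA Hf Hc.
  set (E := fun x => a <= x <= b /\ forall r, a <= r <= x -> A r).
  assert (Hb : bound E) by (exists b; intros x [Hx _]; lra).
  assert (He : exists x, E x).
  { exists a. split. lra. intros r Hr. replace r with a by lra. exact HA. }
  destruct (completeness E Hb He) as [m [Hub Hlub]].
  assert (Ham : a <= m) by (apply Hub; split; [lra| intros r Hr; replace r with a by lra; exact HA]).
  assert (Hmb : m <= b) by (apply Hlub; intros x [Hx _]; lra).
  assert (H1 : forall r, a <= r < m -> A r).
  { intros r Hr. apply NNPP. intro HnA.
    assert (m <= r). { apply Hlub. intros x [Hx Hx2]. destruct (Rle_or_lt x r); auto.
      exfalso. apply HnA. apply Hx2. lra. }
    lra. }
  assert (HAm : A m).
  { destruct (Req_dec m a) as [->|Hne]; auto. apply Hc. lra. auto. }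
  assert (Hm : m = b).
  { destruct (Req_dec m b); auto. exfalso.
    destruct (Hf m) as [d [Hd Hd2]]. lra. auto.
    set (x := Rmin b (m + d/2)).
    assert (E x).
    { split. unfold x. split. apply Rmin_glb; lra. apply Rmin_l.
      intros r Hr. destruct (Rlt_or_le r m). apply H1; lra.
      apply Hd2. split. lra. assert (x <= m + d/2) by apply Rmin_r. lra. }
    assert (x <= m) by (apply Hub; auto).
    assert (m < x). { unfold x. apply Rmin_glb_lt; lra. }
    lra. }
  intros s Hs. destruct (Rlt_or_le s m). apply H1; lra. replace s with m by lra. exact HAm.
Qed.

Lemma barrier (phi dphi : R -> R) (a cc h : R) : 0 < h ->
  (forall t, a <= t -> derivable_pt_lim phi t (dphi t)) ->
  (forall t, a <= t -> phi t < cc -> 0 <= dphi t) ->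
  cc <= phi a -> forall t, a <= t -> cc - h < phi t.
Proof.
  intros Hh Hd Hpos Ha t Ht.
  apply (cont_ind (fun r => cc - h < phi r) a t); try lra.
  - intros s Hs Hlt.
    destruct (cont_eps phi s (d_cont _ _ _ (Hd s ltac:(lra))) (phi s - (cc - h)) ltac:(lra)) as [d [Hd0 Hd1]].
    exists d. split; auto. intros r Hr.
    assert (Rabs (phi r - phi s) < phi s - (cc-h)) by (apply Hd1; rewrite Rabs_right; lra).
    apply Rabs_def2 in H. lra.
  - intros s Hs Hprev.
    destruct (Rlt_or_le (cc - h) (phi s)) as [|Hle]; auto. exfalso.
    destruct (cont_eps phi s (d_cont _ _ _ (Hd s ltac:(lra))) (cc - phi s) ltac:(lra)) as [d [Hd0 Hd1]].
    set (r := Rmax a (s - d/2)).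
    assert (Hr1 : a <= r) by apply Rmax_l.
    assert (Hr2 : r < s) by (unfold r; apply Rmax_lub_lt; lra).
    assert (Hr3 : s - d/2 <= r) by apply Rmax_r.
    destruct (MVT_cor2 phi dphi r s Hr2) as [c [Heq Hc]].
    { intros c Hc. apply Hd. lra. }
    assert (Rabs (phi c - phi s) < cc - phi s) by (apply Hd1; rewrite Rabs_left1; lra).
    apply Rabs_def2 in H.
    assert (0 <= dphi c) by (apply Hpos; lra).
    assert (cc - h < phi r) by (apply Hprev; lra).
    assert (0 <= dphi c * (s - r)) by (apply Rmult_le_pos; lra).
    lra.
Qed.

Lemma Rabs_def2b a B : Rabs a <= B -> -B <= a <= B.
Proof. unfold Rabs; destruct (Rcase_abs a); lra. Qed.

Lemma persist_gen (x U dphi : R -> R) (T0 c eps B h : R) :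
  0 < eps -> 0 <= B -> 0 < h ->
  (forall t, T0 <= t -> Rabs (U t) <= B) ->
  (forall t, T0 <= t -> derivable_pt_lim (fun s => x s - U s) t (dphi t)) ->
  (forall t, T0 <= t -> x t < c -> eps <= dphi t) ->
  exists T1, forall t, T1 <= t -> c - 2*B - h < x t.
Proof.
  intros He HB Hh HU Hd Hx.
  set (phi := fun s => x s - U s).
  destruct (classic (exists T1, T0 <= T1 /\ c <= x T1)) as [[T1 [HT1 HxT1]]|Hno].
  - exists T1. intros t Ht.
    assert (c - B - h < phi t).
    { apply (barrier phi dphi T1 (c - B) h).
      + lra.
      + intros; apply Hd; lra.
      + intros s Hs Hps. apply Rle_trans with eps. lra. apply Hx. lra.
        unfold phi in Hps. specialize (HU s ltac:(lra)). apply Rabs_def2b in HU. lra.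
      + unfold phi. specialize (HU T1 HT1). apply Rabs_def2b in HU. lra.
      + lra. }
    unfold phi in H. specialize (HU t ltac:(lra)). apply Rabs_def2b in HU. lra.
  - exfalso.
    assert (Hall : forall t, T0 <= t -> x t < c).
    { intros t Ht. destruct (Rlt_or_le (x t) c); auto. exfalso. apply Hno. exists t; auto. }
    set (s := Rabs ((c + B - phi T0)/eps) + 1).
    assert (Hs : 0 < s) by (unfold s; pose proof (Rabs_pos ((c + B - phi T0)/eps)); lra).
    destruct (MVT_cor2 phi dphi T0 (T0 + s) ltac:(lra)) as [xi [Heq Hxi]].
    { intros; apply Hd; lra. }
    assert (eps <= dphi xi) by (apply Hx; [lra | apply Hall; lra]).
    assert (eps * s <= dphi xi * s) by (apply Rmult_le_compat_r; lra).
    assert (phi (T0 + s) < c + B).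
    { unfold phi. specialize (HU (T0+s) ltac:(lra)). apply Rabs_def2b in HU.
      specialize (Hall (T0 + s) ltac:(lra)). lra. }
    assert ((c + B - phi T0) / eps <= Rabs ((c + B - phi T0)/eps)) by apply RRle_abs.
    assert (eps * ((c + B - phi T0) / eps) = c + B - phi T0) by (field; lra).
    assert (eps * ((c + B - phi T0) / eps) <= eps * Rabs ((c + B - phi T0)/eps))
      by (apply Rmult_le_compat_l; lra).
    unfold s in *. replace (T0 + (Rabs ((c + B - phi T0) / eps) + 1) - T0) with
      (Rabs ((c + B - phi T0) / eps) + 1) in Heq by ring.
    nra.
Qed.

Lemma pos_logder (u du : R -> R) (a s C : R) : a < s ->
  (forall r, a <= r <= s -> derivable_pt_lim u r (du r)) -> 0 < u a ->
  (forall r, a < r < s -> - C * u r <= du r) -> 0 < u s.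
Proof.
  intros Has Hd Hua Hc.
  set (w := fun r => u r * exp (C*r)).
  destruct (MVT_cor2 w (fun r => du r * exp (C*r) + u r * (C * exp (C*r))) a s Has) as [c [Heq Hcc]].
  { intros r Hr. eapply dval. apply (d_mult u (fun r => exp (C*r))). apply Hd; lra. apply d_explin. reflexivity. }
  assert (Hc2 := Hc c Hcc). pose proof (exp_pos (C*c)).
  assert (0 <= (du c * exp (C*c) + u c * (C * exp (C*c))) * (s - a)).
  { apply Rmult_le_pos; [|lra]. nra. }
  assert (0 < w a) by (unfold w; apply Rmult_lt_0_compat; auto; apply exp_pos).
  assert (0 < w s) by lra.
  unfold w in H2. pose proof (exp_pos (C*s)).
  destruct (Rlt_or_le 0 (u s)); auto. nra.
Qed.

Section RF.
Variables (f : R -> R) (thr : R) (hf : response_fun f thr).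

Lemma rf_nonneg x : 0 <= x -> 0 <= f x.
Proof. destruct hf as [H _]; auto. Qed.
Lemma rf_0 : f 0 = 0.
Proof. destruct hf as [_ [H _]]; auto. Qed.
Lemma rf_deriv : exists f', (forall x, 0 <= x -> derivable_pt_lim f x (f' x)) /\
      (forall x, 0 <= x -> continuity_pt f' x) /\ (forall x, 0 <= x -> 0 < f' x).
Proof. destruct hf as [_ [_ [H _]]]; auto. Qed.
Lemma rf_cont x : 0 <= x -> continuity_pt f x.
Proof. intros Hx. destruct rf_deriv as [f' [H1 _]]. eapply d_cont. apply H1; auto. Qed.
Lemma rf_strict x y : 0 <= x -> x < y -> f x < f y.
Proof.
  intros Hx Hxy. destruct rf_deriv as [f' [H1 [_ H3]]].
  destruct (MVT_cor2 f f' x y Hxy) as [c [Heq Hc]].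
  { intros; apply H1; lra. }
  assert (0 < f' c) by (apply H3; lra).
  assert (0 < f' c * (y - x)) by (apply Rmult_lt_0_compat; lra). lra.
Qed.
Lemma rf_mono x y : 0 <= x -> x <= y -> f x <= f y.
Proof. intros. destruct (Req_dec x y) as [->|]. lra. left; apply rf_strict; lra. Qed.
Lemma rf_bound : exists F, 0 < F /\ forall x, 0 <= x -> f x <= F.
Proof.
  destruct hf as [_ [_ [_ [[B HB] _]]]].
  exists (Rabs B + 1). split. pose proof (Rabs_pos B); lra.
  intros x Hx. specialize (HB x Hx). apply Rabs_def2b in HB.
  pose proof (RRle_abs B). lra.
Qed.
Lemma rf_lin : exists K, 0 < K /\ forall x, 0 <= x -> f x <= K * x.
Proof.
  destruct rf_deriv as [f' [H1 [H2 H3]]].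
  destruct (continuity_ab_maj f' 0 1 ltac:(lra)) as [Mx [HM HMx]].
  { intros; apply H2; lra. }
  destruct rf_bound as [F [HF HFb]].
  exists (Rmax (f' Mx) F). split. apply Rlt_le_trans with F; auto. apply Rmax_r.
  intros x Hx. destruct (Rle_or_lt x 1).
  - destruct (Req_dec x 0) as [->|Hne]. rewrite rf_0; lra.
    destruct (MVT_cor2 f f' 0 x ltac:(lra)) as [c [Heq Hc]].
    { intros; apply H1; lra. }
    rewrite rf_0 in Heq.
    assert (f' c <= f' Mx) by (apply HM; lra).
    assert (f' Mx <= Rmax (f' Mx) F) by apply Rmax_l.
    assert (0 < f' c) by (apply H3; lra).
    nra.
  - assert (F <= Rmax (f' Mx) F) by apply Rmax_r.
    specialize (HFb x Hx). nra.
Qed.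
Lemma rf_slope M : 0 <= M -> exists m, 0 < m /\ forall x y, 0 <= x <= M -> 0 <= y <= M ->
   m * (x - y)^2 <= (x - y) * (f x - f y).
Proof.
  intros HM0. destruct rf_deriv as [f' [H1 [H2 H3]]].
  destruct (continuity_ab_min f' 0 M HM0) as [mx [Hm Hmx]].
  { intros; apply H2; lra. }
  exists (f' mx). split. apply H3; lra.
  assert (Hgen : forall x y, 0 <= x <= M -> 0 <= y <= M -> x < y ->
     f' mx * (x - y)^2 <= (x - y) * (f x - f y)).
  { intros x y Hx Hy Hxy.
    destruct (MVT_cor2 f f' x y Hxy) as [c [Heq Hc]].
    { intros; apply H1; lra. }
    assert (f' mx <= f' c) by (apply Hm; lra).
    replace ((x - y) * (f x - f y)) with (f' c * (y - x)^2) by (rewrite <- (Ropp_involutive (f x - f y)); rewrite Ropp_minus_distr, Heq; ring).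
    replace ((x-y)^2) with ((y-x)^2) by ring.
    apply Rmult_le_compat_r. apply pow2_ge_0. auto. }
  intros x y Hx Hy. destruct (Rtotal_order x y) as [Hlt|[Heq|Hgt]].
  - apply Hgen; auto.
  - subst. replace (y - y) with 0 by ring. simpl. lra.
  - replace ((x-y)^2) with ((y-x)^2) by ring.
    replace ((x - y) * (f x - f y)) with ((y - x) * (f y - f x)) by ring.
    apply Hgen; auto.
Qed.
End RF.

Lemma pos_nbhd u s : continuity_pt u s -> 0 < u s ->
  exists d, 0 < d /\ forall r, Rabs (r - s) < d -> 0 < u r.
Proof.
  intros Hc Hp. destruct (cont_eps u s Hc (u s) Hp) as [d [Hd H]].
  exists d; split; auto. intros r Hr. specialize (H r Hr). apply Rabs_def2 in H. lra.
Qed.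

Ltac mpos := repeat (match goal with |- 0 < _ * _ => apply Rmult_lt_0_compat end).


Lemma Wbound (D D1 g1 mu n lam fn fl P1 m F1 : R) :
  0 < D -> 0 < g1 -> 0 < fn -> 0 < fl -> fn <= F1 -> fl = D1 / g1 ->
  P1 = D * (mu - lam) / fl -> lam < mu -> 0 < m ->
  m * (n - lam)^2 <= (n - lam) * (fn - fl) ->
  g1 * D * m / F1 * (n - lam)^2 <= (g1 * fn - D1) * (P1 - (mu - n) * D / fn).
Proof.
  intros hD hg1 Hfn Hfl HF1 Hfl' HP1 Hlm Hm Hsl.
  assert (HD1 : D1 = g1 * fl) by (rewrite Hfl'; field; lra).
  assert (E : (g1 * fn - D1) * (P1 - (mu - n) * D / fn) =
     g1 * D * ((mu - lam) * (fn - fl)^2 + (n - lam) * (fn - fl) * fl) / (fl * fn)).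
  { rewrite HD1, HP1. field. split; lra. }
  rewrite E.
  assert (0 <= (mu - lam) * (fn - fl)^2) by (apply Rmult_le_pos; [lra| apply pow2_ge_0]).
  assert (H1 : g1 * D * ((n - lam) * (fn - fl) * fl) / (fl * fn) <=
     g1 * D * ((mu - lam) * (fn - fl)^2 + (n - lam) * (fn - fl) * fl) / (fl * fn)).
  { unfold Rdiv. apply Rmult_le_compat_r. left; apply Rinv_0_lt_compat; nra.
    apply Rmult_le_compat_l. nra. lra. }
  assert (E2 : g1 * D * ((n - lam) * (fn - fl) * fl) / (fl * fn) = g1 * D * ((n - lam) * (fn - fl)) / fn)
    by (field; lra).
  rewrite E2 in H1.
  assert (H2 : g1 * D * (m * (n-lam)^2) / fn <= g1 * D * ((n - lam) * (fn - fl)) / fn).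
  { unfold Rdiv. apply Rmult_le_compat_r. left; apply Rinv_0_lt_compat; nra.
    apply Rmult_le_compat_l. nra. lra. }
  assert (H3 : g1 * D * m / F1 * (n - lam)^2 <= g1 * D * (m * (n-lam)^2) / fn).
  { assert (0 <= g1 * D * (m * (n-lam)^2)) by (assert (0 <= (n-lam)^2) by apply pow2_ge_0;
      apply Rmult_le_pos; [nra| nra]).
    replace (g1 * D * m / F1 * (n - lam)^2) with (g1 * D * (m * (n-lam)^2) / F1) by (field; lra).
    unfold Rdiv. apply Rmult_le_compat_l. auto.
    apply Rinv_le_contravar; lra. }
  lra.
Qed.

Lemma Zcore (D D1 D2 g1 g2 mu n p z fn fp fl lam P1 Q1 kap k k2 a C QB K2 F2 sig eps0 lZ : R) :
  0 < D -> 0 < D1 -> 0 < g1 -> 0 < g2 -> 0 < p -> 0 < z -> 0 < fn ->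
  fl = D1 / g1 -> P1 * fl = D * (mu - lam) -> Q1 = lam + P1 / g1 ->
  kap * (n - lam)^2 <= (g1 * fn - D1) * (P1 - (mu - n) * D / fn) ->
  0 <= fp -> fp <= K2 * p -> fp <= F2 -> 0 < P1 ->
  Rabs (n + p / g1 - Q1) <= QB ->
  a = (D1 - D)^2 / D1 -> 0 < kap -> k = k2 * (a + D1) / kap -> 0 < k2 ->
  C = k * P1 * K2 + 2 * k2 * QB * F2 / g1 ->
  0 < sig -> D2 + eps0 <= k2 * D1 * sig^2 / (2 * g1^2) ->
  P1 - sig = lZ + sig ->
  (lZ + sig <= p -> eps0 <= g2 * fp - D2) ->
  eps0 - C * z <=
   (g2 * z * fp - D2 * z) / z -
   (k * ((g1 - D1 * / fn) * ((mu - n) * D - p * fn) + (1 - P1 * / p) * (g1 * p * fn - D1 * p - z * fp))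
    + k2 * (2 * (n + p / g1 - Q1) * (((mu - n) * D - p * fn) + (g1 * p * fn - D1 * p - z * fp) / g1))).
Proof.
  intros hD hD1 hg1 hg2 Hp Hz Hfn Hfl HP1fl HQ1 HW Hfp0 Hfp1 Hfp2 HP1 HQB Ha Hkap Hk Hk2 HC Hsig Hk2s Hsl Hcase.
  set (X := n - lam). set (Y := n + p / g1 - Q1).
  set (W := (g1 * fn - D1) * (P1 - (mu - n) * D / fn)).
  assert (I1 : (g1 - D1 * / fn) * ((mu - n) * D - p * fn) + (1 - P1 * / p) * (g1 * p * fn - D1 * p - z * fp)
     = - W - z * fp + P1 * (z * fp / p)).
  { unfold W. field. split; lra. }
  assert (HPD : P1 * D1 / g1 = D * (mu - lam)) by (rewrite <- HP1fl, Hfl; field; lra).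
  assert (I2 : ((mu - n) * D - p * fn) + (g1 * p * fn - D1 * p - z * fp) / g1
     = - D1 * Y + (D1 - D) * X - z * fp / g1).
  { unfold X, Y. rewrite HQ1.
    match goal with |- ?L = ?R => assert (L - R = D * (mu - lam) - P1 * D1 / g1) by (field; lra) end.
    lra. }
  assert (I3 : (g2 * z * fp - D2 * z) / z = g2 * fp - D2) by (field; lra).
  rewrite I1, I2, I3.
  assert (Hfpp : fp / p <= K2).
  { apply Rmult_le_reg_r with p; auto. unfold Rdiv; rewrite Rmult_assoc, Rinv_l; lra. }
  assert (Hzfp : 0 <= z * fp) by nra.
  assert (B1 : P1 * (z * fp / p) <= P1 * K2 * z).
  { replace (z * fp / p) with (z * (fp / p)) by (field; lra).
    assert (z * (fp / p) <= z * K2) by (apply Rmult_le_compat_l; lra). nra. }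
  assert (HY : - QB <= Y <= QB) by (unfold Y; unfold Rabs in HQB; destruct Rcase_abs in HQB; lra).
  assert (B2 : - (QB * F2 * z) <= Y * (z * fp)).
  { assert (z * fp <= z * F2) by (apply Rmult_le_compat_l; lra). nra. }
  assert (B3 : 2 * (D1 - D) * X * Y <= D1 * Y^2 + a * X^2).
  { rewrite Ha. assert (0 <= (D1 * Y - (D1 - D) * X)^2 / D1).
    { apply Rmult_le_pos. apply pow2_ge_0. left; apply Rinv_0_lt_compat; lra. }
    assert ((D1 * Y - (D1 - D) * X)^2 / D1 = D1 * Y^2 + (D1 - D)^2 / D1 * X^2 - 2 * (D1 - D) * X * Y)
      by (field; lra). lra. }
  assert (Hkk : k * kap = k2 * (a + D1)) by (rewrite Hk; field; lra).
  assert (Hk0 : 0 < k).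
  { rewrite Hk. apply Rdiv_lt_0_compat; auto. apply Rmult_lt_0_compat; auto.
    rewrite Ha. assert (0 <= (D1 - D)^2 / D1) by (apply Rmult_le_pos; [apply pow2_ge_0| left; apply Rinv_0_lt_compat; lra]). lra. }
  assert (BW : k * (kap * X^2) <= k * W) by (apply Rmult_le_compat_l; [lra| exact HW]).
  assert (Main : (g2 * fp - D2) + k2 * D1 * (X^2 + Y^2) - C * z <=
    g2 * fp - D2 - (k * (- W - z * fp + P1 * (z * fp / p)) + k2 * (2 * Y * (- D1 * Y + (D1 - D) * X - z * fp / g1)))).
  { rewrite HC.
    assert (E : k2 * (2 * Y * (- D1 * Y + (D1 - D) * X - z * fp / g1)) =
       - 2 * k2 * D1 * Y^2 + k2 * (2 * (D1 - D) * X * Y) - 2 * k2 * (Y * (z * fp)) / g1) by (field; lra).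
    rewrite E.
    assert (k2 * (2 * (D1 - D) * X * Y) <= k2 * (D1 * Y^2 + a * X^2)) by (apply Rmult_le_compat_l; lra).
    assert (2 * k2 * (- (QB * F2 * z)) / g1 <= 2 * k2 * (Y * (z * fp)) / g1).
    { unfold Rdiv. apply Rmult_le_compat_r. left; apply Rinv_0_lt_compat; lra. apply Rmult_le_compat_l; lra. }
    assert (2 * k2 * (- (QB * F2 * z)) / g1 = - (2 * k2 * QB * F2 / g1 * z)) by (field; lra).
    assert (k * z * fp >= 0) by nra.
    assert (k * (P1 * (z * fp / p)) <= k * (P1 * K2 * z)) by (apply Rmult_le_compat_l; lra).
    nra. }
  eapply Rle_trans; [|exact Main].
  destruct (Rle_or_lt (lZ + sig) p) as [Hge|Hlt].
  - specialize (Hcase Hge). assert (0 <= k2 * D1 * (X^2 + Y^2)).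
    { apply Rmult_le_pos. nra. assert (0 <= X^2) by apply pow2_ge_0. assert (0 <= Y^2) by apply pow2_ge_0. lra. }
    lra.
  - assert (HPY : p - P1 = g1 * (Y - X)) by (unfold X, Y; rewrite HQ1; field; lra).
    assert (Y - X < - sig / g1).
    { assert (g1 * (Y - X) < - sig) by lra.
      apply Rmult_lt_reg_l with g1; auto. replace (g1 * (- sig / g1)) with (- sig) by (field; lra). lra. }
    assert (sig^2 / (2 * g1^2) <= (X^2 + Y^2)).
    { assert ((sig / g1)^2 <= (Y - X)^2).
      { assert (0 < sig / g1) by (apply Rdiv_lt_0_compat; lra). nra. }
      replace (sig^2 / (2 * g1^2)) with ((sig/g1)^2 / 2) by (field; lra).
      assert ((Y - X)^2 <= 2 * (X^2 + Y^2)) by (assert (0 <= (X + Y)^2) by apply pow2_ge_0; nra). lra. }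
    assert (k2 * D1 * (sig^2 / (2 * g1^2)) <= k2 * D1 * (X^2 + Y^2)) by (apply Rmult_le_compat_l; nra).
    assert (k2 * D1 * sig^2 / (2 * g1^2) = k2 * D1 * (sig^2 / (2 * g1^2))) by (field; lra).
    assert (0 <= g2 * fp) by nra.
    lra.
Qed.

Lemma antideriv (h : R -> R) (a : R) : 0 < a ->
  (forall x, 0 < x -> continuity_pt h x) ->
  forall x, 0 < x -> derivable_pt_lim (fun y => RInt h a y) x (h x).
Proof.
  intros Ha Hc x Hx. apply is_derive_Reals.
  apply (is_derive_RInt h (fun y => RInt h a y) a x).
  - assert (He : 0 < x/2) by lra.
    exists (mkposreal _ He). intros y Hy.
    apply (RInt_correct (V:=R_CompleteNormedModule)). apply (ex_RInt_continuous (V:=R_CompleteNormedModule)).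
    intros z Hz. apply continuity_pt_filterlim. apply Hc.
    change (Rabs (y - x) < x/2) in Hy.
    apply Rabs_def2 in Hy.
    assert (0 < Rmin a y) by (apply Rmin_glb_lt; lra). lra.
  - apply continuity_pt_filterlim. apply Hc; auto.
Qed.

Lemma ln_mono x y : 0 < x -> x <= y -> ln x <= ln y.
Proof. intros. destruct (Req_dec x y) as [->|]. lra. left; apply ln_increasing; lra. Qed.

Section Main.
Variables (D D1 D2 g1 g2 mu : R) (f1 f2 : R -> R) (lamP lamZ : R)
  (hD : 0 < D) (hD1 : 0 < D1) (hD2 : 0 < D2)
  (hg1 : 0 < g1) (hg2 : 0 < g2) (hmu : 0 < mu)
  (hf1 : response_fun f1 (Rmax D D1 / g1))
  (hf2 : response_fun f2 (Rmax D D2 / g2))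
  (hlamP : 0 <= lamP /\ f1 lamP = D1 / g1)
  (hlamZ : 0 <= lamZ /\ f2 lamZ = D2 / g2)
  (hmuc : mu > mu_c1 D g1 D1 lamP lamZ).

Definition dN (N P : R -> R) t := (mu - N t) * D - P t * f1 (N t).
Definition dP (N P Z : R -> R) t := g1 * P t * f1 (N t) - D1 * P t - Z t * f2 (P t).
Definition dZ (P Z : R -> R) t := g2 * Z t * f2 (P t) - D2 * Z t.
Definition Sf (N P Z : R -> R) t := N t + P t / g1 + Z t / (g1 * g2).
Definition dS (N P Z : R -> R) t := mu * D - D * N t - D1 * P t / g1 - D2 * Z t / (g1 * g2).

Definition sol N P Z := is_solution mu D D1 D2 g1 g2 f1 f2 N P Z.

Lemma sol_dN N P Z : sol N P Z -> forall t, 0 < t -> derivable_pt_lim N t (dN N P t).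
Proof. intros [_ [_ [_ H]]] t Ht. apply (H t Ht). Qed.
Lemma sol_dP N P Z : sol N P Z -> forall t, 0 < t -> derivable_pt_lim P t (dP N P Z t).
Proof. intros [_ [_ [_ H]]] t Ht. apply (H t Ht). Qed.
Lemma sol_dZ N P Z : sol N P Z -> forall t, 0 < t -> derivable_pt_lim Z t (dZ P Z t).
Proof. intros [_ [_ [_ H]]] t Ht. apply (H t Ht). Qed.
Lemma sol_dS N P Z : sol N P Z -> forall t, 0 < t -> derivable_pt_lim (Sf N P Z) t (dS N P Z t).
Proof.
  intros Hs t Ht. unfold Sf. eapply dval.
  apply d_plus. apply d_plus. apply (sol_dN _ _ _ Hs t Ht).
  apply (derivable_pt_lim_div_scal P). apply (sol_dP _ _ _ Hs t Ht).
  apply (derivable_pt_lim_div_scal Z). apply (sol_dZ _ _ _ Hs t Ht).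
  unfold dS, dN, dP, dZ. field. lra.
Qed.

Definition good N P Z t0 := sol N P Z /\ 0 < t0 /\
  forall t, t0 <= t -> 0 < N t /\ 0 < P t /\ 0 < Z t.

Lemma dS_le N P Z t : 0 < N t -> 0 < P t -> 0 < Z t -> dS N P Z t <= mu * D.
Proof.
  intros. unfold dS.
  assert (0 < D1 * P t / g1) by (unfold Rdiv; repeat apply Rmult_lt_0_compat; auto; apply Rinv_0_lt_compat; auto).
  assert (0 < D2 * Z t / (g1 * g2)) by (unfold Rdiv; repeat apply Rmult_lt_0_compat; auto; apply Rinv_0_lt_compat; nra).
  nra.
Qed.

Lemma positivity N P Z : sol N P Z -> 0 < N 0 -> 0 < P 0 -> 0 < Z 0 ->
  exists t0, good N P Z t0.
Proof.
  intros Hs HN HP HZ.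
  destruct rf_lin with f1 (Rmax D D1 / g1) as [K1 [HK1 HK1b]]; auto.
  destruct rf_lin with f2 (Rmax D D2 / g2) as [K2 [HK2 HK2b]]; auto.
  destruct Hs as [cN [cP [cZ Hd]]] eqn:Hs'. clear Hs'.
  destruct (cN (N 0) HN) as [dn [Hdn Hdn2]].
  destruct (cP (P 0) HP) as [dp [Hdp Hdp2]].
  destruct (cZ (Z 0) HZ) as [dz [Hdz Hdz2]].
  set (t0 := Rmin dn (Rmin dp dz) / 2).
  assert (Ht0 : 0 < t0) by (unfold t0; assert (0 < Rmin dn (Rmin dp dz)) by (repeat apply Rmin_glb_lt; auto); lra).
  assert (Ht0n : t0 < dn) by (unfold t0; pose proof (Rmin_l dn (Rmin dp dz)); lra).
  assert (Ht0p : t0 < dp) by (unfold t0; pose proof (Rmin_r dn (Rmin dp dz)); pose proof (Rmin_l dp dz); lra).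
  assert (Ht0z : t0 < dz) by (unfold t0; pose proof (Rmin_r dn (Rmin dp dz)); pose proof (Rmin_r dp dz); lra).
  assert (HN0 : 0 < N t0) by (specialize (Hdn2 t0 ltac:(lra)); apply Rabs_def2 in Hdn2; lra).
  assert (HP0 : 0 < P t0) by (specialize (Hdp2 t0 ltac:(lra)); apply Rabs_def2 in Hdp2; lra).
  assert (HZ0 : 0 < Z t0) by (specialize (Hdz2 t0 ltac:(lra)); apply Rabs_def2 in Hdz2; lra).
  exists t0. split; [exact Hs|]. split; auto.
  intros t Ht.
  apply (cont_ind (fun r => 0 < N r /\ 0 < P r /\ 0 < Z r) t0 t); auto; try lra.
  - intros s Hs1 [H1 [H2 H3]].
    destruct (pos_nbhd N s (d_cont _ _ _ (sol_dN _ _ _ Hs s ltac:(lra))) H1) as [e1 [He1 He1']].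
    destruct (pos_nbhd P s (d_cont _ _ _ (sol_dP _ _ _ Hs s ltac:(lra))) H2) as [e2 [He2 He2']].
    destruct (pos_nbhd Z s (d_cont _ _ _ (sol_dZ _ _ _ Hs s ltac:(lra))) H3) as [e3 [He3 He3']].
    exists (Rmin e1 (Rmin e2 e3)). split. repeat apply Rmin_glb_lt; auto.
    intros r Hr. pose proof (Rmin_l e1 (Rmin e2 e3)). pose proof (Rmin_r e1 (Rmin e2 e3)).
    pose proof (Rmin_l e2 e3). pose proof (Rmin_r e2 e3).
    repeat split; [apply He1'|apply He2'|apply He3']; rewrite Rabs_right; lra.
  - intros s Hs1 Hprev.
    set (Sb := Sf N P Z t0 + mu * D * (s - t0)).
    assert (HSb : forall r, t0 <= r < s -> Sf N P Z r <= Sb).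
    { intros r Hr. destruct (Req_dec r t0) as [->|Hne].
      - unfold Sb. assert (0 <= mu * D * (s - t0)) by (apply Rmult_le_pos; nra). lra.
      - destruct (MVT_cor2 (Sf N P Z) (dS N P Z) t0 r ltac:(lra)) as [c [Heq Hc]].
        { intros c Hc. apply sol_dS; auto; lra. }
        destruct (Hprev c ltac:(lra)) as [A1 [A2 A3]].
        pose proof (dS_le N P Z c A1 A2 A3).
        unfold Sb. assert (dS N P Z c * (r - t0) <= mu * D * (s - t0)).
        { apply Rle_trans with (mu * D * (r - t0)). apply Rmult_le_compat_r; lra.
          apply Rmult_le_compat_l; nra. }
        lra. }
    assert (HPb : forall r, t0 <= r < s -> P r <= g1 * Sb).
    { intros r Hr. destruct (Hprev r Hr) as [A1 [A2 A3]]. specialize (HSb r Hr).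
      unfold Sf in HSb.
      assert (0 <= Z r / (g1 * g2)) by (unfold Rdiv; apply Rmult_le_pos; [lra| left; apply Rinv_0_lt_compat; nra]).
      assert (P r / g1 <= Sb) by lra.
      apply Rmult_le_compat_l with (r := g1) in H0; [|lra].
      replace (g1 * (P r / g1)) with (P r) in H0 by (field; lra). lra. }
    assert (HZb : forall r, t0 <= r < s -> Z r <= g1 * g2 * Sb).
    { intros r Hr. destruct (Hprev r Hr) as [A1 [A2 A3]]. specialize (HSb r Hr).
      unfold Sf in HSb.
      assert (0 <= P r / g1) by (unfold Rdiv; apply Rmult_le_pos; [lra| left; apply Rinv_0_lt_compat; nra]).
      assert (Z r / (g1 * g2) <= Sb) by lra.
      apply Rmult_le_compat_l with (r := g1 * g2) in H0; [|nra].
      replace (g1 * g2 * (Z r / (g1 * g2))) with (Z r) in H0 by (field; lra). lra. }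
    repeat split.
    + apply (pos_logder N (dN N P) t0 s (D + K1 * (g1 * Sb))); auto; try lra.
      * intros r Hr. apply sol_dN with Z; auto; lra.
      * intros r Hr. destruct (Hprev r ltac:(lra)) as [A1 [A2 A3]].
        specialize (HPb r ltac:(lra)). specialize (HK1b (N r) ltac:(lra)).
        assert (0 <= f1 (N r)) by (apply (rf_nonneg f1 _ hf1); lra).
        unfold dN. nra.
    + apply (pos_logder P (dP N P Z) t0 s (D1 + K2 * (g1 * g2 * Sb))); auto; try lra.
      * intros r Hr. apply sol_dP; auto; lra.
      * intros r Hr. destruct (Hprev r ltac:(lra)) as [A1 [A2 A3]].
        specialize (HZb r ltac:(lra)). specialize (HK2b (P r) ltac:(lra)).
        assert (0 <= f1 (N r)) by (apply (rf_nonneg f1 _ hf1); lra).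
        assert (0 <= f2 (P r)) by (apply (rf_nonneg f2 _ hf2); lra).
        assert (Z r * f2 (P r) <= Z r * (K2 * P r)) by (apply Rmult_le_compat_l; lra).
        assert (Z r * (K2 * P r) <= g1 * g2 * Sb * (K2 * P r)) by (apply Rmult_le_compat_r; nra).
        assert (0 <= g1 * P r * f1 (N r)) by (apply Rmult_le_pos; nra).
        unfold dP. nra.
    + apply (pos_logder Z (dZ P Z) t0 s D2); auto; try lra.
      * intros r Hr. apply sol_dZ with N; auto; lra.
      * intros r Hr. destruct (Hprev r ltac:(lra)) as [A1 [A2 A3]].
        assert (0 <= f2 (P r)) by (apply (rf_nonneg f2 _ hf2); lra).
        assert (0 <= g2 * Z r * f2 (P r)) by (apply Rmult_le_pos; nra).
        unfold dZ. nra.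
Qed.

Lemma good_sol N P Z t0 : good N P Z t0 -> sol N P Z.
Proof. intros [H _]; exact H. Qed.
Lemma good_t0 N P Z t0 : good N P Z t0 -> 0 < t0.
Proof. intros [_ [H _]]; exact H. Qed.
Lemma good_pos N P Z t0 : good N P Z t0 -> forall t, t0 <= t -> 0 < N t /\ 0 < P t /\ 0 < Z t.
Proof. intros [_ [_ H]]; exact H. Qed.

Lemma S_bound : exists Sm, 0 < Sm /\ forall N P Z t0, good N P Z t0 ->
   exists T, t0 <= T /\ forall t, T <= t -> Sf N P Z t <= Sm.
Proof.
  set (mS := Rmin D (Rmin D1 D2)).
  assert (HmS : 0 < mS) by (unfold mS; repeat apply Rmin_glb_lt; auto).
  assert (HmS1 : mS <= D) by apply Rmin_l.
  assert (HmS2 : mS <= D1) by (unfold mS; pose proof (Rmin_r D (Rmin D1 D2)); pose proof (Rmin_l D1 D2); lra).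
  assert (HmS3 : mS <= D2) by (unfold mS; pose proof (Rmin_r D (Rmin D1 D2)); pose proof (Rmin_r D1 D2); lra).
  set (Sm0 := 2 * mu * D / mS).
  assert (HSm0 : mS * Sm0 = 2 * mu * D) by (unfold Sm0; field; lra).
  exists (Sm0 + 1). split. assert (0 < Sm0) by (unfold Sm0; apply Rdiv_lt_0_compat; nra). lra.
  intros N P Z t0 Hg.
  pose proof (good_sol _ _ _ _ Hg) as Hs. pose proof (good_t0 _ _ _ _ Hg) as Ht0.
  pose proof (good_pos _ _ _ _ Hg) as Hpos.
  destruct (persist_gen (fun t => -1 * Sf N P Z t) (fun _ => 0) (fun t => -1 * dS N P Z t - 0)
     t0 (- Sm0) (mu * D) 0 1) as [T1 HT1]; try lra.
  - apply Rmult_lt_0_compat; lra.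
  - intros t _. unfold Rabs; destruct Rcase_abs; lra.
  - intros t Ht. apply d_minus. apply d_scal. apply sol_dS; auto; lra. apply d_const.
  - intros t Ht Hlt. destruct (Hpos t Ht) as [A1 [A2 A3]].
    unfold dS. unfold Sf in Hlt.
    assert (mS * (P t / g1) <= D1 * P t / g1).
    { unfold Rdiv. rewrite <- Rmult_assoc. apply Rmult_le_compat_r. left; apply Rinv_0_lt_compat; lra. nra. }
    assert (mS * (Z t / (g1*g2)) <= D2 * Z t / (g1*g2)).
    { unfold Rdiv. rewrite <- Rmult_assoc. apply Rmult_le_compat_r. left; apply Rinv_0_lt_compat; nra. nra. }
    assert (mS * N t <= D * N t) by nra.
    assert (mS * Sm0 < mS * (N t + P t / g1 + Z t / (g1 * g2))) by (apply Rmult_lt_compat_l; lra).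
    nra.
  - exists (Rmax T1 t0). split. apply Rmax_r. intros t Ht.
    assert (T1 <= t) by (pose proof (Rmax_l T1 t0); lra).
    specialize (HT1 t H). lra.
Qed.

Lemma bounds : exists Sm, 0 < Sm /\ forall N P Z t0, good N P Z t0 ->
   exists T, t0 <= T /\ forall t, T <= t ->
     0 < N t <= Sm /\ 0 < P t <= g1 * Sm /\ 0 < Z t <= g1 * g2 * Sm.
Proof.
  destruct S_bound as [Sm [HSm H]]. exists Sm. split; auto.
  intros N P Z t0 Hg. destruct (H N P Z t0 Hg) as [T [HT HT2]].
  exists T. split; auto. intros t Ht.
  destruct (good_pos _ _ _ _ Hg t ltac:(lra)) as [A1 [A2 A3]].
  specialize (HT2 t Ht). unfold Sf in HT2.
  assert (0 < P t / g1) by (apply Rdiv_lt_0_compat; lra).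
  assert (0 < Z t / (g1 * g2)) by (apply Rdiv_lt_0_compat; nra).
  assert (E1 : P t = g1 * (P t / g1)) by (field; lra).
  assert (E2 : Z t = g1 * g2 * (Z t / (g1 * g2))) by (field; lra).
  repeat split; try lra.
  - rewrite E1. apply Rmult_le_compat_l; lra.
  - rewrite E2. apply Rmult_le_compat_l; nra.
Qed.


Lemma N_persist : exists n0, 0 < n0 /\ forall N P Z t0, good N P Z t0 ->
   exists T, t0 <= T /\ forall t, T <= t -> n0 <= N t.
Proof.
  destruct bounds as [Sm [HSm Hb]].
  destruct (rf_lin f1 _ hf1) as [K1 [HK1 HK1b]].
  set (Pm := g1 * Sm).
  assert (HPm : 0 < Pm) by (unfold Pm; nra).
  set (c := Rmin (mu/2) (mu * D / (4 * Pm * K1))).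
  assert (Hc0 : 0 < c) by (unfold c; apply Rmin_glb_lt; [lra| apply Rdiv_lt_0_compat; nra]).
  assert (Hc1 : c <= mu/2) by apply Rmin_l.
  assert (Hc2 : c <= mu * D / (4 * Pm * K1)) by apply Rmin_r.
  assert (Hfc : f1 c <= mu * D / (4 * Pm)).
  { apply Rle_trans with (K1 * c). apply HK1b; lra.
    apply Rmult_le_compat_l with (r := K1) in Hc2; [|lra].
    replace (K1 * (mu * D / (4 * Pm * K1))) with (mu * D / (4 * Pm)) in Hc2 by (field; lra). lra. }
  exists (c/2). split. lra.
  intros N P Z t0 Hg. destruct (Hb N P Z t0 Hg) as [T [HT HT2]].
  pose proof (good_sol _ _ _ _ Hg) as Hs. pose proof (good_t0 _ _ _ _ Hg) as Ht0.
  destruct (persist_gen N (fun _ => 0) (fun t => dN N P t - 0) T c (mu * D / 4) 0 (c/2))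
    as [T1 HT1]; try lra.
  - apply Rdiv_lt_0_compat; nra.
  - intros t _. unfold Rabs; destruct Rcase_abs; lra.
  - intros t Ht. apply d_minus. apply sol_dN with Z; auto; lra. apply d_const.
  - intros t Ht Hlt. destruct (HT2 t Ht) as [[A1 A1'] [[A2 A2'] [A3 A3']]].
    assert (f1 (N t) <= f1 c) by (apply (rf_mono f1 _ hf1); lra).
    assert (0 <= f1 (N t)) by (apply (rf_nonneg f1 _ hf1); lra).
    assert (P t * f1 (N t) <= Pm * (mu * D / (4 * Pm))).
    { apply Rmult_le_compat; try lra. unfold Pm; lra. }
    replace (Pm * (mu * D / (4 * Pm))) with (mu * D / 4) in H1 by (field; lra).
    unfold dN. nra.
  - exists (Rmax T1 T). split. pose proof (Rmax_r T1 T); lra. intros t Ht.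
    assert (T1 <= t) by (pose proof (Rmax_l T1 T); lra).
    specialize (HT1 t H). lra.
Qed.


Lemma lam_lt_mu : lamP < mu.
Proof.
  unfold mu_c1 in hmuc. destruct hlamZ as [HZ _].
  assert (0 <= D1 * lamZ / (D * g1)) by (apply Rmult_le_pos; [nra| left; apply Rinv_0_lt_compat; nra]).
  lra.
Qed.

Lemma P_persist : exists p0, 0 < p0 /\ forall N P Z t0, good N P Z t0 ->
   exists T, t0 <= T /\ forall t, T <= t -> p0 <= P t.
Proof.
  destruct bounds as [Sm [HSm Hb]].
  destruct (rf_bound f1 _ hf1) as [F1 [HF1 HF1b]].
  destruct (rf_lin f2 _ hf2) as [K2 [HK2 HK2b]].
  pose proof lam_lt_mu as Hlm. destruct hlamP as [HlP HflP].
  set (mu' := (lamP + mu)/2).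
  assert (Hf' : f1 lamP < f1 mu') by (apply (rf_strict f1 _ hf1); unfold mu'; lra).
  set (e3 := (g1 * f1 mu' - D1)/3).
  assert (He3 : 0 < e3).
  { unfold e3. rewrite HflP in Hf'. apply Rmult_lt_compat_l with (r := g1) in Hf'; [|lra].
    replace (g1 * (D1 / g1)) with D1 in Hf' by (field; lra). lra. }
  set (r := (mu - lamP)/2).
  assert (Hr : 0 < r) by (unfold r; lra).
  set (k3 := (D1 + 3 * e3) / (2 * D * r^2)).
  assert (Hk3 : 0 < k3) by (unfold k3; apply Rdiv_lt_0_compat; [lra| apply Rmult_lt_0_compat; [lra| apply pow_lt; lra]]).
  assert (Hk3r : 2 * k3 * D * r^2 = D1 + 3 * e3) by (unfold k3; field; split; lra).
  set (Nb := Sm + mu).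
  assert (HNb : 0 < Nb) by (unfold Nb; lra).
  set (b := 2 * K2 / D2).
  assert (Hb0 : 0 < b) by (unfold b; apply Rdiv_lt_0_compat; lra).
  assert (HbD : b * D2 = 2 * K2) by (unfold b; field; lra).
  set (delta := Rmin (e3 / (2 * k3 * Nb * F1)) (D2 / (2 * g2 * K2))).
  assert (Hdl : 0 < delta).
  { assert (0 < 2 * k3 * Nb * F1) by (mpos; lra).
    assert (0 < 2 * g2 * K2) by (mpos; lra).
    unfold delta. apply Rmin_glb_lt; apply Rdiv_lt_0_compat; lra. }
  assert (Hdl1 : 2 * k3 * Nb * F1 * delta <= e3).
  { assert (delta <= e3 / (2 * k3 * Nb * F1)) by apply Rmin_l.
    assert (0 < 2 * k3 * Nb * F1) by (mpos; lra).
    apply Rmult_le_compat_l with (r := 2 * k3 * Nb * F1) in H; [|lra].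
    replace (2 * k3 * Nb * F1 * (e3 / (2 * k3 * Nb * F1))) with e3 in H by (field; lra). lra. }
  assert (Hdl2 : 2 * g2 * K2 * delta <= D2).
  { assert (delta <= D2 / (2 * g2 * K2)) by apply Rmin_r.
    apply Rmult_le_compat_l with (r := 2 * g2 * K2) in H; [|nra].
    replace (2 * g2 * K2 * (D2 / (2 * g2 * K2))) with D2 in H by (field; lra). lra. }
  set (BP := b * (g1 * g2 * Sm) + k3 * Nb^2).
  assert (HBP : 0 <= BP) by (unfold BP; assert (0 < g1*g2*Sm) by (mpos; lra); nra).
  exists (exp (ln delta - 2 * BP - 1)). split. apply exp_pos.
  intros N P Z t0 Hg. destruct (Hb N P Z t0 Hg) as [T [HT HT2]].
  pose proof (good_sol _ _ _ _ Hg) as Hs. pose proof (good_t0 _ _ _ _ Hg) as Ht0.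
  destruct (persist_gen (fun s => ln (P s)) (fun s => b * Z s + k3 * (N s - mu)^2)
     (fun t => dP N P Z t / P t - (b * dZ P Z t + k3 * (2 * (N t - mu) * (dN N P t - 0))))
     T (ln delta) e3 BP 1) as [T1 HT1]; try lra.
  - intros t Ht. destruct (HT2 t Ht) as [[A1 A1'] [[A2 A2'] [A3 A3']]].
    assert (0 <= (N t - mu)^2 <= Nb^2).
    { split. apply pow2_ge_0. unfold Nb. simpl. nra. }
    rewrite Rabs_right; unfold BP; [|nra].
    assert (b * Z t <= b * (g1 * g2 * Sm)) by (apply Rmult_le_compat_l; lra).
    assert (k3 * (N t - mu)^2 <= k3 * Nb^2) by (apply Rmult_le_compat_l; lra). lra.
  - intros t Ht. destruct (HT2 t Ht) as [[A1 A1'] [[A2 A2'] [A3 A3']]].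
    apply d_minus. apply d_ln. auto. apply sol_dP; [exact Hs| lra].
    apply d_plus. apply d_scal. apply sol_dZ with N; auto; lra.
    apply d_scal. apply (d_sq (fun s => N s - mu)). apply d_minus. apply sol_dN with Z; auto; lra.
    apply d_const.
  - intros t Ht Hlt. destruct (HT2 t Ht) as [[A1 A1'] [[A2 A2'] [A3 A3']]].
    assert (Hp : P t < delta) by (apply ln_lt_inv; auto).
    set (n := N t) in *. set (p := P t) in *. set (z := Z t) in *.
    set (fn := f1 n). set (fp := f2 p).
    assert (Hfn0 : 0 <= fn) by (apply (rf_nonneg f1 _ hf1); lra).
    assert (Hfn1 : fn <= F1) by (apply HF1b; lra).
    assert (Hfp0 : 0 <= fp) by (apply (rf_nonneg f2 _ hf2); lra).
    assert (Hfp1 : fp <= K2 * p) by (apply HK2b; lra).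
    assert (Hdec : dP N P Z t / p - (b * dZ P Z t + k3 * (2 * (n - mu) * (dN N P t - 0))) =
      (g1 * fn - D1 + 2 * k3 * D * (n - mu)^2) + 2 * k3 * ((n - mu) * (p * fn))
      + z * (b * D2 - fp / p - b * g2 * fp)).
    { unfold dP, dZ, dN. fold n p z. fold fn fp. field. lra. }
    rewrite Hdec.
    assert (HA1 : 3 * e3 <= g1 * fn - D1 + 2 * k3 * D * (n - mu)^2).
    { destruct (Rle_or_lt mu' n).
      - assert (f1 mu' <= fn) by (apply (rf_mono f1 _ hf1); [unfold mu'; lra| lra]).
        assert (0 <= 2 * k3 * D * (n - mu)^2) by (apply Rmult_le_pos; [apply Rmult_le_pos; [apply Rmult_le_pos; lra|lra]|apply pow2_ge_0]).
        unfold e3. nra.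
      - assert (r^2 <= (n - mu)^2).
        { unfold r, mu' in *. simpl. nra. }
        assert (0 <= g1 * fn) by nra.
        assert (2 * k3 * D * r^2 <= 2 * k3 * D * (n - mu)^2) by (apply Rmult_le_compat_l; nra).
        lra. }
    assert (HA2 : - e3 <= 2 * k3 * ((n - mu) * (p * fn))).
    { assert (0 <= p * fn <= delta * F1) by (split; [nra| apply Rmult_le_compat; lra]).
      assert (- Nb <= n - mu <= Nb) by (unfold Nb; lra).
      assert (- (Nb * (delta * F1)) <= (n - mu) * (p * fn)) by nra.
      assert (2 * k3 * (- (Nb * (delta * F1))) <= 2 * k3 * ((n - mu) * (p * fn))) by (apply Rmult_le_compat_l; lra).
      nra. }
    assert (HA3 : 0 <= z * (b * D2 - fp / p - b * g2 * fp)).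
    { apply Rmult_le_pos. lra.
      assert (fp / p <= K2) by (apply Rmult_le_reg_r with p; auto; unfold Rdiv; rewrite Rmult_assoc, Rinv_l; lra).
      assert (b * g2 * fp <= K2).
      { assert (K2 * p <= K2 * delta) by (apply Rmult_le_compat_l; lra).
        assert (g2 * fp <= g2 * (K2 * delta)) by (apply Rmult_le_compat_l; lra).
        assert (g2 * fp <= D2 / 2) by lra.
        assert (b * (g2 * fp) <= b * (D2 / 2)) by (apply Rmult_le_compat_l; lra).
        nra. }
      lra. }
    lra.
  - exists (Rmax T1 T). split. pose proof (Rmax_r T1 T); lra. intros t Ht.
    assert (T1 <= t) by (pose proof (Rmax_l T1 T); lra).
    specialize (HT1 t H). destruct (HT2 t ltac:(pose proof (Rmax_r T1 T); lra)) as [_ [[A2 _] _]].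
    rewrite <- (exp_ln (P t)) by auto. left. apply exp_increasing. exact HT1.
Qed.


Lemma f1_pos x : 0 < x -> 0 < f1 x.
Proof. intros. rewrite <- (rf_0 f1 _ hf1). apply (rf_strict f1 _ hf1); lra. Qed.

Lemma lamP_pos : 0 < lamP.
Proof.
  destruct hlamP as [H1 H2]. destruct (Req_dec lamP 0) as [E|]; [|lra].
  exfalso. rewrite E, (rf_0 f1 _ hf1) in H2. assert (0 < D1 / g1) by (apply Rdiv_lt_0_compat; lra). lra.
Qed.

Definition G0 (x : R) := RInt (fun y => / f1 y) lamP x.

Lemma G0_deriv x : 0 < x -> derivable_pt_lim G0 x (/ f1 x).
Proof.
  intros Hx. apply (antideriv (fun y => / f1 y) lamP lamP_pos); auto.
  intros y Hy. apply continuity_pt_inv. apply (rf_cont f1 _ hf1); lra.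
  apply Rgt_not_eq. apply f1_pos; auto.
Qed.

Lemma G0_lam : G0 lamP = 0.
Proof. unfold G0. exact (RInt_point (V:=R_CompleteNormedModule) lamP (fun y => / f1 y)). Qed.

Lemma G0_bound nl x : 0 < nl -> nl <= lamP -> nl <= x -> Rabs (G0 x) <= Rabs (x - lamP) / f1 nl.
Proof.
  intros Hnl Hnll Hx. pose proof (f1_pos nl Hnl) as Hf.
  assert (Hinv : forall c, nl <= c -> 0 < / f1 c <= / f1 nl).
  { intros c Hc. assert (0 < f1 c) by (apply f1_pos; lra). split. apply Rinv_0_lt_compat; auto.
    apply Rinv_le_contravar; auto. apply (rf_mono f1 _ hf1); lra. }
  destruct (Rtotal_order x lamP) as [Hlt|[Heq|Hgt]].
  - destruct (MVT_cor2 G0 (fun y => / f1 y) x lamP Hlt) as [c [Heq Hc]].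
    { intros c Hc. apply G0_deriv; lra. }
    rewrite G0_lam in Heq. destruct (Hinv c ltac:(lra)).
    rewrite (Rabs_left1 (x - lamP)) by lra.
    assert (G0 x = - (/ f1 c * (lamP - x))) by lra.
    rewrite H1, Rabs_Ropp, Rabs_right by nra.
    unfold Rdiv. replace (- (x - lamP)) with (lamP - x) by ring. rewrite Rmult_comm.
    apply Rmult_le_compat_l; lra.
  - subst. rewrite G0_lam. unfold Rminus. rewrite Rplus_opp_r, Rabs_R0. unfold Rdiv; rewrite Rmult_0_l; lra.
  - destruct (MVT_cor2 G0 (fun y => / f1 y) lamP x Hgt) as [c [Heq Hc]].
    { intros c Hc. apply G0_deriv; lra. }
    rewrite G0_lam in Heq. destruct (Hinv c ltac:(lra)).
    rewrite (Rabs_right (x - lamP)) by lra.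
    assert (G0 x = / f1 c * (x - lamP)) by lra.
    rewrite H1, Rabs_right by nra.
    unfold Rdiv. rewrite Rmult_comm.
    apply Rmult_le_compat_l; lra.
Qed.


Lemma Z_persist : exists z0, 0 < z0 /\ forall N P Z t0, good N P Z t0 ->
   exists T, t0 <= T /\ forall t, T <= t -> z0 <= Z t.
Proof.
  destruct bounds as [Sm [HSm Hb]].
  destruct N_persist as [n0 [Hn0 HNp]].
  destruct P_persist as [p0 [Hp0 HPp]].
  destruct (rf_bound f1 _ hf1) as [F1 [HF1 HF1b]].
  destruct (rf_bound f2 _ hf2) as [F2 [HF2 HF2b]].
  destruct (rf_lin f2 _ hf2) as [K2 [HK2 HK2b]].
  pose proof lamP_pos as Hlam. pose proof lam_lt_mu as Hlm.
  destruct hlamP as [_ Hfl]. destruct hlamZ as [HlZ HflZ].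
  set (lam := lamP) in *. set (fl := f1 lam).
  assert (Hfl0 : 0 < fl) by (unfold fl; apply f1_pos; auto).
  set (P1 := D * (mu - lam) / fl).
  assert (HP1 : 0 < P1) by (unfold P1; apply Rdiv_lt_0_compat; nra).
  assert (HP1fl : P1 * fl = D * (mu - lam)) by (unfold P1; field; lra).
  assert (HP1Z : lamZ < P1).
  { unfold mu_c1 in hmuc. fold lam in hmuc.
    unfold P1, fl. rewrite Hfl.
    assert (D1 * lamZ / (D * g1) < mu - lam) by lra.
    apply Rmult_lt_compat_l with (r := D * g1 / D1) in H; [|apply Rdiv_lt_0_compat; nra].
    replace (D * g1 / D1 * (D1 * lamZ / (D * g1))) with lamZ in H by (field; lra).
    replace (D * (mu - lam) / (D1 / g1)) with (D * g1 / D1 * (mu - lam)) by (field; lra). lra. }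
  set (Q1 := lam + P1 / g1).
  set (nl := Rmin n0 lam).
  assert (Hnl : 0 < nl) by (unfold nl; apply Rmin_glb_lt; lra).
  assert (Hnl1 : nl <= n0) by apply Rmin_l.
  assert (Hnl2 : nl <= lam) by apply Rmin_r.
  destruct (rf_slope f1 _ hf1 (Rmax Sm lam)) as [m1 [Hm1 Hsl]].
  { pose proof (Rmax_r Sm lam); lra. }
  set (kap := g1 * D * m1 / F1).
  assert (Hkap : 0 < kap) by (unfold kap; apply Rdiv_lt_0_compat; [mpos; lra| lra]).
  set (a := (D1 - D)^2 / D1).
  assert (Ha : 0 <= a) by (unfold a; apply Rmult_le_pos; [apply pow2_ge_0| left; apply Rinv_0_lt_compat; lra]).
  set (sig := (P1 - lamZ)/2).
  assert (Hsig : 0 < sig) by (unfold sig; lra).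
  set (eps0 := g2 * f2 (lamZ + sig) - D2).
  assert (Heps0 : 0 < eps0).
  { unfold eps0. assert (f2 lamZ < f2 (lamZ + sig)) by (apply (rf_strict f2 _ hf2); lra).
    rewrite HflZ in H. apply Rmult_lt_compat_l with (r := g2) in H; [|lra].
    replace (g2 * (D2 / g2)) with D2 in H by (field; lra). lra. }
  set (k2 := 2 * g1^2 * (D2 + eps0) / (D1 * sig^2)).
  assert (Hk2 : 0 < k2) by (unfold k2; apply Rdiv_lt_0_compat; [mpos; try apply pow_lt; lra| mpos; try apply pow_lt; lra]).
  assert (Hk2s : D2 + eps0 <= k2 * D1 * sig^2 / (2 * g1^2)) by (unfold k2; right; field; split; lra).
  set (k := k2 * (a + D1) / kap).
  assert (Hk : 0 < k) by (unfold k; apply Rdiv_lt_0_compat; [mpos; lra| lra]).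
  set (QB := 2 * Sm + Q1).
  assert (HQ1 : 0 < Q1) by (unfold Q1; assert (0 < P1 / g1) by (apply Rdiv_lt_0_compat; lra); lra).
  set (C := k * P1 * K2 + 2 * k2 * QB * F2 / g1).
  assert (HC : 0 < C).
  { unfold C. assert (0 < k * P1 * K2) by (mpos; lra).
    assert (0 < 2 * k2 * QB * F2 / g1) by (apply Rdiv_lt_0_compat; [mpos; unfold QB; lra| lra]). lra. }
  set (eta := eps0 / (2 * C)).
  assert (Heta : 0 < eta) by (unfold eta; apply Rdiv_lt_0_compat; lra).
  set (VB := g1 * Sm + D1 * ((Sm + lam) / f1 nl) + g1 * Sm + P1 * (Rabs (ln p0) + Rabs (ln (g1 * Sm)))).
  set (BZ := k * VB + k2 * QB^2).
  assert (HVB : 0 <= VB).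
  { unfold VB. pose proof (f1_pos nl Hnl).
    assert (0 <= (Sm + lam) / f1 nl) by (apply Rdiv_le_0_compat; lra).
    pose proof (Rabs_pos (ln p0)). pose proof (Rabs_pos (ln (g1 * Sm))). nra. }
  assert (HBZ : 0 <= BZ) by (unfold BZ; assert (0 <= QB^2) by apply pow2_ge_0; nra).
  exists (exp (ln eta - 2 * BZ - 1)). split. apply exp_pos.
  intros N P Z t0 Hg.
  pose proof (good_sol _ _ _ _ Hg) as Hs. pose proof (good_t0 _ _ _ _ Hg) as Ht0.
  destruct (Hb N P Z t0 Hg) as [T1 [HT1 HT1b]].
  destruct (HNp N P Z t0 Hg) as [T2 [HT2 HT2b]].
  destruct (HPp N P Z t0 Hg) as [T3 [HT3 HT3b]].
  set (T := Rmax T1 (Rmax T2 T3)).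
  assert (HT : forall t, T <= t -> (0 < N t <= Sm /\ 0 < P t <= g1 * Sm /\ 0 < Z t <= g1 * g2 * Sm)
     /\ n0 <= N t /\ p0 <= P t).
  { intros t Ht. pose proof (Rmax_l T1 (Rmax T2 T3)). pose proof (Rmax_r T1 (Rmax T2 T3)).
    pose proof (Rmax_l T2 T3). pose proof (Rmax_r T2 T3).
    split. apply HT1b; unfold T in Ht; lra. split. apply HT2b; unfold T in Ht; lra. apply HT3b; unfold T in Ht; lra. }
  assert (HTt0 : t0 <= T) by (unfold T; pose proof (Rmax_l T1 (Rmax T2 T3)); lra).
  set (V := fun s => g1 * N s - D1 * G0 (N s) + P s - P1 * ln (P s)).
  set (Qf := fun s => N s + P s / g1).
  destruct (persist_gen (fun s => ln (Z s)) (fun s => k * V s + k2 * (Qf s - Q1)^2)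
     (fun t => dZ P Z t / Z t - (k * (g1 * dN N P t - D1 * (/ f1 (N t) * dN N P t) + dP N P Z t - P1 * (dP N P Z t / P t))
        + k2 * (2 * (Qf t - Q1) * (dN N P t + dP N P Z t / g1 - 0))))
     T (ln eta) (eps0 / 2) BZ 1) as [T4 HT4]; try lra.
  - intros t Ht. destruct (HT t Ht) as [[[A1 A1'] [[A2 A2'] [A3 A3']]] [A4 A5]].
    assert (HV : Rabs (V t) <= VB).
    { unfold V, VB.
      assert (HG : Rabs (G0 (N t)) <= (Sm + lam) / f1 nl).
      { eapply Rle_trans. apply (G0_bound nl); auto; lra.
        pose proof (f1_pos nl Hnl). unfold Rdiv. apply Rmult_le_compat_r. left; apply Rinv_0_lt_compat; auto.
        change lamP with lam. unfold Rabs; destruct Rcase_abs; lra. }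
      assert (HL : Rabs (ln (P t)) <= Rabs (ln p0) + Rabs (ln (g1 * Sm))).
      { pose proof (ln_mono p0 (P t) Hp0 A5). pose proof (ln_mono (P t) (g1 * Sm) A2 A2').
        pose proof (Rabs_pos (ln p0)). pose proof (Rabs_pos (ln (g1 * Sm))).
        pose proof (RRle_abs (ln (g1 * Sm))). pose proof (Rabs_Ropp (ln p0)). pose proof (RRle_abs (- ln p0)).
        unfold Rabs at 1; destruct Rcase_abs; lra. }
      assert (HG' := Rabs_def2b _ _ HG). assert (HL' := Rabs_def2b _ _ HL).
      assert (- (D1 * ((Sm + lam) / f1 nl)) <= D1 * G0 (N t) <= D1 * ((Sm + lam) / f1 nl)) by (split; nra).
      assert (- (P1 * (Rabs (ln p0) + Rabs (ln (g1 * Sm)))) <= P1 * ln (P t) <= P1 * (Rabs (ln p0) + Rabs (ln (g1 * Sm)))) by (split; nra).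
      assert (g1 * N t <= g1 * Sm) by (apply Rmult_le_compat_l; lra).
      assert (0 <= g1 * N t) by nra.
      cbv beta. unfold Rabs at 1; destruct Rcase_abs; lra. }
    assert (HQ : Rabs (Qf t - Q1) <= QB).
    { unfold Qf, QB. assert (0 < P t / g1) by (apply Rdiv_lt_0_compat; lra).
      assert (P t / g1 <= Sm) by (apply Rmult_le_reg_l with g1; auto; replace (g1 * (P t / g1)) with (P t) by (field; lra); lra).
      unfold Rabs; destruct Rcase_abs; lra. }
    assert (HQ2 : (Qf t - Q1)^2 <= QB^2).
    { assert (HQ' := Rabs_def2b _ _ HQ). nra. }
    assert (HVk : Rabs (k * V t) <= k * VB) by (rewrite Rabs_mult, Rabs_right by lra; apply Rmult_le_compat_l; lra).
    apply Rle_trans with (Rabs (k * V t) + Rabs (k2 * (Qf t - Q1)^2)). apply Rabs_triang.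
    rewrite (Rabs_right (k2 * _)) by (assert (0 <= (Qf t - Q1)^2) by apply pow2_ge_0; nra).
    unfold BZ. assert (k2 * (Qf t - Q1)^2 <= k2 * QB^2) by (apply Rmult_le_compat_l; lra). lra.
  - intros t Ht. destruct (HT t Ht) as [[[A1 A1'] [[A2 A2'] [A3 A3']]] [A4 A5]].
    assert (Htp : 0 < t) by lra.
    pose proof (sol_dN _ _ _ Hs t Htp) as HdN. pose proof (sol_dP _ _ _ Hs t Htp) as HdP.
    pose proof (sol_dZ _ _ _ Hs t Htp) as HdZ.
    apply d_minus. apply d_ln; auto.
    apply d_plus. apply d_scal. unfold V.
    apply d_minus. apply d_plus. apply d_minus. apply d_scal; auto. apply d_scal.
    apply (d_comp G0 N). auto. apply G0_deriv; auto. auto.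
    apply d_scal. apply d_ln; auto.
    apply d_scal. apply (d_sq (fun s => Qf s - Q1)). apply d_minus; [|apply d_const].
    unfold Qf. apply d_plus; auto. apply (derivable_pt_lim_div_scal P). auto.
  - intros t Ht Hlt. destruct (HT t Ht) as [[[A1 A1'] [[A2 A2'] [A3 A3']]] [A4 A5]].
    assert (Hz : Z t < eta) by (apply ln_lt_inv; auto).
    assert (Hfn : 0 < f1 (N t)) by (apply f1_pos; auto).
    assert (HW : kap * (N t - lam)^2 <= (g1 * f1 (N t) - D1) * (P1 - (mu - N t) * D / f1 (N t))).
    { assert (W1 : f1 (N t) <= F1) by (apply HF1b; lra).
      assert (W2 : fl = D1 / g1) by (unfold fl; rewrite Hfl; auto).
      assert (W3 : P1 = D * (mu - lam) / fl) by reflexivity.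
      assert (W4 : m1 * (N t - lam)^2 <= (N t - lam) * (f1 (N t) - fl)).
      { apply Hsl. split. lra. pose proof (Rmax_l Sm lam); lra. split. lra. pose proof (Rmax_r Sm lam); lra. }
      unfold kap. apply (Wbound D D1 g1 mu (N t) lam (f1 (N t)) fl P1 m1 F1); auto. }
    assert (Hcore := Zcore D D1 D2 g1 g2 mu (N t) (P t) (Z t) (f1 (N t)) (f2 (P t)) fl lam P1 Q1 kap k k2 a C QB K2 F2 sig eps0 lamZ
      hD hD1 hg1 hg2 A2 A3 Hfn).
    assert (Hz2 : C * Z t <= eps0 / 2).
    { assert (C * Z t <= C * eta) by (apply Rmult_le_compat_l; lra).
      unfold eta in H. replace (C * (eps0 / (2 * C))) with (eps0 / 2) in H by (field; lra). lra. }
    assert (eps0 - C * Z t <= dZ P Z t / Z t - (k * (g1 * dN N P t - D1 * (/ f1 (N t) * dN N P t) + dP N P Z t - P1 * (dP N P Z t / P t))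
        + k2 * (2 * (Qf t - Q1) * (dN N P t + dP N P Z t / g1 - 0)))).
    { unfold dZ, dN, dP, Qf.
      match goal with |- _ <= ?R => replace R with
        ((g2 * Z t * f2 (P t) - D2 * Z t) / Z t -
   (k * ((g1 - D1 * / f1 (N t)) * ((mu - N t) * D - P t * f1 (N t)) + (1 - P1 * / P t) * (g1 * P t * f1 (N t) - D1 * P t - Z t * f2 (P t)))
    + k2 * (2 * (N t + P t / g1 - Q1) * (((mu - N t) * D - P t * f1 (N t)) + (g1 * P t * f1 (N t) - D1 * P t - Z t * f2 (P t)) / g1))))
        by (field; split; lra) end.
      assert (E1 : fl = D1 / g1) by (unfold fl; rewrite Hfl; reflexivity).
      assert (E3 : Q1 = lam + P1 / g1) by reflexivity.
      assert (E4 : 0 <= f2 (P t)) by (apply (rf_nonneg f2 _ hf2); lra).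
      assert (E5 : f2 (P t) <= K2 * P t) by (apply HK2b; lra).
      assert (E6 : f2 (P t) <= F2) by (apply HF2b; lra).
      assert (E7 : Rabs (N t + P t / g1 - Q1) <= QB).
      { unfold QB. assert (0 < P t / g1) by (apply Rdiv_lt_0_compat; lra).
        assert (P t / g1 <= Sm) by (apply Rmult_le_reg_l with g1; auto; replace (g1 * (P t / g1)) with (P t) by (field; lra); lra).
        unfold Rabs; destruct Rcase_abs; lra. }
      assert (E8 : a = (D1 - D)^2 / D1) by reflexivity.
      assert (E9 : k = k2 * (a + D1) / kap) by reflexivity.
      assert (E10 : C = k * P1 * K2 + 2 * k2 * QB * F2 / g1) by reflexivity.
      assert (E11 : P1 - sig = lamZ + sig) by (unfold sig; field).
      assert (E12 : lamZ + sig <= P t -> eps0 <= g2 * f2 (P t) - D2).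
      { intros Hge. unfold eps0. assert (f2 (lamZ + sig) <= f2 (P t)) by (apply (rf_mono f2 _ hf2); lra).
        apply Rmult_le_compat_l with (r := g2) in H; lra. }
      exact (Hcore E1 HP1fl E3 HW E4 E5 E6 HP1 E7 E8 Hkap E9 Hk2 E10 Hsig Hk2s E11 E12). }
    lra.
  - exists (Rmax T4 T). split. pose proof (Rmax_r T4 T); lra. intros t Ht.
    assert (T4 <= t) by (pose proof (Rmax_l T4 T); lra).
    specialize (HT4 t H). destruct (HT t ltac:(pose proof (Rmax_r T4 T); lra)) as [[_ [_ [A3 _]]] _].
    rewrite <- (exp_ln (Z t)) by auto. left. apply exp_increasing. exact HT4.
Qed.


Lemma final : exists eps, 0 < eps /\
    forall N P Z : R -> R,
      is_solution mu D D1 D2 g1 g2 f1 f2 N P Z ->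
      0 < N 0 -> 0 < P 0 -> 0 < Z 0 ->
      liminf_ge N eps /\ liminf_ge P eps /\ liminf_ge Z eps.
Proof.
  destruct N_persist as [n0 [Hn0 HN]].
  destruct P_persist as [p0 [Hp0 HP]].
  destruct Z_persist as [z0 [Hz0 HZ]].
  set (e := Rmin n0 (Rmin p0 z0)).
  assert (He1 : e <= n0) by apply Rmin_l.
  assert (He2 : e <= p0) by (unfold e; pose proof (Rmin_r n0 (Rmin p0 z0)); pose proof (Rmin_l p0 z0); lra).
  assert (He3 : e <= z0) by (unfold e; pose proof (Rmin_r n0 (Rmin p0 z0)); pose proof (Rmin_r p0 z0); lra).
  exists e. split. unfold e; repeat apply Rmin_glb_lt; auto.
  intros N P Z Hs HN0 HP0 HZ0.
  destruct (positivity N P Z Hs HN0 HP0 HZ0) as [t0 Hg].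
  destruct (HN N P Z t0 Hg) as [T1 [_ H1]].
  destruct (HP N P Z t0 Hg) as [T2 [_ H2]].
  destruct (HZ N P Z t0 Hg) as [T3 [_ H3]].
  repeat split; intros d Hd.
  - exists T1. intros t Ht. specialize (H1 t Ht). lra.
  - exists T2. intros t Ht. specialize (H2 t Ht). lra.
  - exists T3. intros t Ht. specialize (H3 t Ht). lra.
Qed.

End Main.

Theorem theorem2p6
  (D D1 D2 gamma1 gamma2 mu : R) (f1 f2 : R -> R) (lamP lamZ : R)
  (hD : 0 < D) (hD1 : 0 < D1) (hD2 : 0 < D2)
  (hg1 : 0 < gamma1) (hg2 : 0 < gamma2) (hmu : 0 < mu)
  (hf1 : response_fun f1 (Rmax D D1 / gamma1))
  (hf2 : response_fun f2 (Rmax D D2 / gamma2))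
  (hlamP : 0 <= lamP /\ f1 lamP = D1 / gamma1)
  (hlamZ : 0 <= lamZ /\ f2 lamZ = D2 / gamma2)
  (hmuc : mu > mu_c1 D gamma1 D1 lamP lamZ) :
  exists eps, 0 < eps /\
    forall N P Z : R -> R,
      is_solution mu D D1 D2 gamma1 gamma2 f1 f2 N P Z ->
      0 < N 0 -> 0 < P 0 -> 0 < Z 0 ->
      liminf_ge N eps /\ liminf_ge P eps /\ liminf_ge Z eps.
Proof.
  eapply final; eauto.
Qed.
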